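(* For every graph $G$ on $m\ge 3$ vertices, $\lambda_2\ge d_3$, where $\lambda_2$ is the second largest eigenvalue of the Laplacian matrix $L(G)$ and $d_3$ is the third largest vertex degree of $G$.
   Context: All graphs are finite, simple, unweighted and undirected. $L(G)=D(G)-A(G)$ with $A(G)$ the adjacency matrix and $D(G)$ the diagonal matrix of degrees. Laplacian eigenvalues $\lambda_1\ge\lambda_2\ge\cdots$ and degrees $d_1\ge d_2\ge\cdots$ are listed in nonincreasing order with multiplicity. *)

(* Defs.v *)
From HB Require Import structures.
From mathcomp Require Import all_boot all_order all_algebra all_field.
Set Implicit Arguments. Unset Strict Implicit. Unset Printing Implicit Defensive.
Import Order.TTheory GRing.Theory Num.Theory.

Definition simple_graph (m : nat) (e : rel 'I_m) : Prop :=
  symmetric e /\ irreflexive e.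

Definition deg (m : nat) (e : rel 'I_m) (i : 'I_m) : nat := #|[set j | e i j]|.

Definition degree_seq (m : nat) (e : rel 'I_m) : seq nat :=
  sort geq [seq deg e i | i <- enum 'I_m].

(* k-th largest degree, 1-based: d_k *)
Definition dk (m : nat) (e : rel 'I_m) (k : nat) : nat := nth 0%N (degree_seq e) k.-1.

Local Open Scope ring_scope.

Definition laplacian (m : nat) (e : rel 'I_m) : 'M[algC]_m :=
  \matrix_(i, j) ((deg e i)%:R *+ (i == j) - (e i j)%:R).

(* s is the list of Laplacian eigenvalues with multiplicity (the roots of the
   characteristic polynomial), in nonincreasing order *)
Definition laplacian_spectrum (m : nat) (e : rel 'I_m) (s : seq algC) : Prop :=
  char_poly (laplacian e) = \prod_(x <- s) ('X - x%:P) /\ sorted (fun x y => y <= x) s.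

(* Main.v *)
Require Import Defs.
From HB Require Import structures.
From mathcomp Require Import all_boot all_order all_algebra all_field.
From mathcomp Require Import ring.
Import Order.TTheory GRing.Theory Num.Theory.
Local Open Scope ring_scope.
Set Implicit Arguments. Unset Strict Implicit. Unset Printing Implicit Defensive.

Notation ct M := (map_mx Num.Def.conjC (M^T)).
Lemma core m (L P : 'M[algC]_m) (D : 'rV[algC]_m) (d : algC) (k : 'I_m) (a b : 'rV[algC]_m) :
  P \is unitarymx -> L = ct P *m diag_mx D *m P ->
  (forall j, j != k -> D 0 j < d) ->
  (forall al be, al *: a + be *: b = 0 -> al = 0 /\ be = 0) ->
  (forall al be, d * ((al *: a + be *: b) *m ct (al *: a + be *: b)) 0 0
     <= ((al *: a + be *: b) *m L *m ct (al *: a + be *: b)) 0 0) ->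
  False.
Proof.
move=> Pu LE Dlt indep Hq.
move Ea: (a *m ct P) => a'; move Eb: (b *m ct P) => b'.
pose al := if (a' 0 k == 0) && (b' 0 k == 0) then 1 else b' 0 k.
pose be := if (a' 0 k == 0) && (b' 0 k == 0) then 0 else - a' 0 k.
have albe : ~ (al = 0 /\ be = 0).
  rewrite /al /be; case: ifP => [_ [] /eqP|/negbT]; first by rewrite oner_eq0.
  by rewrite negb_and => /orP[] /eqP H [H1 H2]; apply: H => //; apply/eqP; rewrite -oppr_eq0 H2.
set x := al *: a + be *: b.
have xn0 : x != 0 by apply/eqP => /indep.
pose y := x *m ct P.
have yk : y 0 k = 0.
  have -> : y = al *: a' + be *: b' by rewrite /y /x mulmxDl -!scalemxAl Ea Eb.
  rewrite !mxE.
  rewrite /al /be; case: ifP => [/andP[/eqP -> /eqP ->]|_]; first by rewrite !mulr0 addr0.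
  by rewrite mulNr mulrC subrr.
have xE : x = y *m P by rewrite /y mulmxKtV.
have cty : ct x = ct P *m ct y by rewrite xE trmx_mul map_mxM.
have nE : (x *m ct x) 0 0 = \sum_j y 0 j * (y 0 j)^*.
  rewrite cty {1}xE mulmxA -[y *m P *m _]mulmxA (unitarymxP Pu) mulmx1 mxE.
  by apply: eq_bigr => j _; rewrite !mxE.
have qE : (x *m L *m ct x) 0 0 = \sum_j D 0 j * (y 0 j * (y 0 j)^*).
  have -> : x *m L *m ct x = y *m diag_mx D *m ct y.
    by rewrite cty LE {1}xE !mulmxA !mulmxtVK.
  rewrite mxE; apply: eq_bigr => j _.
  rewrite mul_mx_diag !mxE; ring.
have yn0 : y != 0 by apply: contraNneq xn0 => y0; rewrite xE y0 mul0mx.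
have [j0 yj0] : exists j0, y 0 j0 != 0.
  apply/existsP; apply: contraNT yn0 => /existsPn H; apply/eqP/rowP => j.
  by move: (H j); rewrite negbK => /eqP ->; rewrite [RHS]mxE.
have j0k : j0 != k by apply: contraNneq yj0 => ->; rewrite yk.
have := Hq al be; rewrite -/x nE qE mulr_sumr -subr_le0 -sumrB.
set S := \sum_(_ < _) _ => Hle.
suff Hlt : 0 < S by move: (lt_le_trans Hlt Hle); rewrite ltxx.
rewrite /S (bigD1 j0) //=.
apply: ltr_pwDl.
  rewrite -mulrBl mulr_gt0 // ?subr_gt0 ?Dlt //.
  by rewrite lt_def mul_conjC_ge0 andbT mul_conjC_eq0.
apply: sumr_ge0 => j _; rewrite -mulrBl.
have [->|jk] := eqVneq j k; first by rewrite yk mul0r mulr0.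
by rewrite mulr_ge0 ?mul_conjC_ge0 // subr_ge0 ltW ?Dlt.
Qed.

Lemma card_count m (A : pred 'I_m) : #|A| = count A (enum 'I_m).
Proof. rewrite cardE /enum_mem size_filter /= filter_predT; exact: eq_count. Qed.

Lemma three_vertices m (e : rel 'I_m) : (3 <= m)%N ->
  exists u v w, [/\ u != v, v != w & w != u] /\
    [/\ (dk e 3 <= deg e u)%N, (dk e 3 <= deg e v)%N & (dk e 3 <= deg e w)%N].
Proof.
move=> m3.
pose p := fun n => (dk e 3 <= n)%N.
have Hc : (2 < count p (degree_seq e))%N.
  have szd : size (degree_seq e) = m by rewrite /degree_seq size_sort size_map size_enum_ord.
  have srt : sorted geq (degree_seq e) by apply: sort_sorted => x y; exact: leq_total.
  have hle : forall i, (i <= 2)%N -> p (nth 0%N (degree_seq e) i).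
    move=> i hi; rewrite /p /dk /=.
    apply: (sorted_leq_nth (leT := geq)) => //;
      [ by move=> x y z h1 h2; exact: leq_trans h2 h1
      | by move=> x; exact: leqnn
      | by rewrite inE szd; exact: leq_ltn_trans hi m3
      | by rewrite inE szd ].
  move: (hle 0%N isT) (hle 1%N isT) (hle 2%N isT) szd.
  case: (degree_seq e) => [|a0 [|a1 [|a2 r]]] /=; try by move=> _ _ _ h; rewrite -h in m3.
  by move=> -> -> ->.
have : (2 < #|[pred i | p (deg e i)]|)%N.
  by rewrite card_count; move: Hc; rewrite /degree_seq count_sort count_map.
case/card_gt2P => u [v [w [[hu hv hw] [h1 h2 h3]]]].
by exists u, v, w; split; [split|split].
Qed.

Lemma lap_herm m (e : rel 'I_m) : simple_graph e -> laplacian e \is hermsymmx.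
Proof.
move=> [esym eirr]; apply/is_hermitianmxP; rewrite expr0 scale1r.
apply/matrixP => i j; rewrite !mxE rmorphB /= rmorphMn /= !conjC_nat esym eq_sym.
by have [->|] := eqVneq j i.
Qed.

Lemma lap_real m (e : rel 'I_m) : laplacian e \is a realmx.
Proof. by apply/mxOverP => i j; rewrite !mxE; apply: rpredB; [apply: rpredMn|]; apply: realn. Qed.

Lemma char_poly_conjmx n (A P : 'M[algC]_n) : P \in unitmx ->
  char_poly (invmx P *m A *m P) = char_poly A.
Proof.
move=> Pu; rewrite /char_poly /char_poly_mx.
have -> : 'X%:M - map_mx polyC (invmx P *m A *m P) =
   map_mx polyC (invmx P) *m ('X%:M - map_mx polyC A) *m map_mx polyC P.
  rewrite mulmxBr mulmxBl !map_mxM; congr (_ - _).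
  by rewrite scalar_mxC -mulmxA -map_mxM mulVmx // map_mx1 mulmx1.
rewrite !det_mulmx !det_map_mx mulrAC -mulrA mulrA /= -polyCM -det_mulmx mulVmx //.
by rewrite det1 mul1r.
Qed.

Lemma lap_form m (e : rel 'I_m) (x : 'rV[algC]_m) :
  (x *m laplacian e *m ct x) 0 0 =
  \sum_i (deg e i)%:R * (x 0 i * (x 0 i)^*) -
  \sum_i \sum_j (e i j)%:R * (x 0 i * (x 0 j)^*).
Proof.
rewrite mxE.
under eq_bigr => j _ do rewrite !mxE big_distrl /=.
rewrite exchange_big /= -sumrB; apply: eq_bigr => i _.
rewrite (eq_bigr (fun j => (deg e i)%:R *+ (i == j) * (x 0 i * (x 0 j)^*) - (e i j)%:R * (x 0 i * (x 0 j)^*))); last first.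
  by move=> j _; rewrite !mxE; ring.
rewrite sumrB (bigD1 i) //= eqxx mulr1n big1 ?addr0 // => j /negbTE.
by rewrite eq_sym => ->; rewrite mulr0n mul0r.
Qed.

Lemma dsum_eq m (e : rel 'I_m) (x : 'rV[algC]_m) (T : pred 'I_m) (b0 : bool) :
  (forall i, x 0 i != 0 -> T i) ->
  (forall i j, T i -> T j -> e i j = b0 && (i != j)) ->
  \sum_i \sum_j (e i j)%:R * (x 0 i * (x 0 j)^*) =
  b0%:R * ((\sum_i x 0 i) * (\sum_i x 0 i)^* - \sum_i x 0 i * (x 0 i)^*).
Proof.
move=> hT hA.
transitivity (\sum_i \sum_j b0%:R * (x 0 i * (x 0 j)^* - (i == j)%:R * (x 0 i * (x 0 j)^*))).
  apply: eq_bigr => i _; apply: eq_bigr => j _.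
  have [xi0|/hT Ti] := eqVneq (x 0 i) 0; first by rewrite xi0 !mul0r !mulr0 subrr mulr0.
  have [xj0|/hT Tj] := eqVneq (x 0 j) 0; first by rewrite xj0 conjC0 !mulr0 subrr mulr0.
  rewrite (hA _ _ Ti Tj); case: (b0) => /=; case: eqVneq => _ /=;
    by rewrite ?mul0r ?mul1r ?subrr ?subr0 ?mulr1n ?mulr0n ?mul0r ?mul1r ?subrr ?subr0.
have E1 : (\sum_i x 0 i) * (\sum_i x 0 i)^* = \sum_i \sum_j x 0 i * (x 0 j)^*.
  by rewrite rmorph_sum big_distrl; apply: eq_bigr => i _; rewrite big_distrr.
have E2 : forall i, \sum_j (i == j)%:R * (x 0 i * (x 0 j)^*) = x 0 i * (x 0 i)^*.
  move=> i; rewrite (bigD1 i) //= eqxx mul1r big1 ?addr0 // => j /negbTE.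
  by rewrite eq_sym => ->; rewrite mul0r.
rewrite E1 -sumrB mulr_sumr; apply: eq_bigr => i _; rewrite -E2 -sumrB mulr_sumr.
by apply: eq_bigr => j _; rewrite mulrBr.
Qed.

Lemma form_ok m (e : rel 'I_m) (x : 'rV[algC]_m) (d : nat) (T : pred 'I_m) (b0 : bool) :
  (forall i, x 0 i != 0 -> T i) ->
  (forall i j, T i -> T j -> e i j = b0 && (i != j)) ->
  (forall i, T i -> (d <= deg e i)%N) -> (b0 -> \sum_i x 0 i = 0) ->
  d%:R * (x *m ct x) 0 0 <= (x *m laplacian e *m ct x) 0 0.
Proof.
move=> hT hA hd hS.
rewrite lap_form (dsum_eq hT hA).
have -> : (x *m ct x) 0 0 = \sum_i x 0 i * (x 0 i)^*.
  by rewrite mxE; apply: eq_bigr => i _; rewrite !mxE.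
rewrite mulr_sumr.
have H1 : \sum_i d%:R * (x 0 i * (x 0 i)^*) <= \sum_i (deg e i)%:R * (x 0 i * (x 0 i)^*).
  apply: ler_sum => i _; have [->|/hT Ti] := eqVneq (x 0 i) 0; first by rewrite !mul0r !mulr0.
  by rewrite -subr_ge0 -mulrBl mulr_ge0 ?mul_conjC_ge0 // subr_ge0 ler_nat (hd _ Ti).
apply: (le_trans H1); move: hS; case: (b0) => /= hS.
  rewrite hS // conjC0 mul0r sub0r mulrN opprK mul1r lerDl.
  by apply: sumr_ge0 => i _; rewrite mul_conjC_ge0.
by rewrite mul0r subr0.
Qed.

Lemma sum_ind m (u : 'I_m) : \sum_i ((i == u)%:R : algC) = 1.
Proof.
rewrite (bigD1 u) //= eqxx big1 ?addr0 // => i /negbTE -> //.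
Qed.

Lemma pair_false m (e : rel 'I_m) (P : 'M[algC]_m) D (d : nat) k u v :
  simple_graph e -> P \is unitarymx -> laplacian e = ct P *m diag_mx D *m P ->
  (forall j, j != k -> D 0 j < d%:R) -> u != v -> ~~ e u v ->
  (d <= deg e u)%N -> (d <= deg e v)%N -> False.
Proof.
move=> [esym eirr] Pu LE hk huv nuv du dv.
apply: (core (a := \row_i (i == u)%:R) (b := \row_i (i == v)%:R) Pu LE hk).
  move=> al be /rowP H; move: (H u) (H v); rewrite !mxE !eqxx (negbTE huv) eq_sym (negbTE huv).
  by rewrite !mulr1 !mulr0 addr0 add0r => -> ->.
move=> al be; apply: (form_ok (T := [pred i | (i == u) || (i == v)]) (b0 := false)) => //.
- move=> i; rewrite !mxE /=; apply: contraR; rewrite negb_or => /andP[/negbTE -> /negbTE ->].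
  by rewrite !mulr0 addr0.
- move=> i j /orP[] /eqP -> /orP[] /eqP ->; rewrite ?eirr //=; first exact/negbTE.
  by rewrite esym; apply/negbTE.
- by move=> i /orP[] /eqP ->.
Qed.

Lemma tri_false m (e : rel 'I_m) (P : 'M[algC]_m) D (d : nat) k u v w :
  simple_graph e -> P \is unitarymx -> laplacian e = ct P *m diag_mx D *m P ->
  (forall j, j != k -> D 0 j < d%:R) -> u != v -> v != w -> w != u ->
  e u v -> e v w -> e w u ->
  (d <= deg e u)%N -> (d <= deg e v)%N -> (d <= deg e w)%N -> False.
Proof.
move=> [esym eirr] Pu LE hk huv hvw hwu euv evw ewu du dv dw.
have evu : e v u by rewrite esym.
have ewv : e w v by rewrite esym.
have euw : e u w by rewrite esym.
have hvu : v != u by rewrite eq_sym.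
have hwv : w != v by rewrite eq_sym.
have huw : u != w by rewrite eq_sym.
apply: (core (a := \row_i ((i == u)%:R - (i == v)%:R))
             (b := \row_i ((i == v)%:R - (i == w)%:R)) Pu LE hk).
  move=> al be /rowP H; move: (H u) (H w); rewrite !mxE !eqxx.
  rewrite (negbTE huv) (negbTE huw) (negbTE hwu) (negbTE hwv).
  rewrite /= ?mulr0n ?mulr1n ?subr0 ?sub0r ?subrr ?mulr0 ?mulr1 ?addr0 ?add0r ?mulrN1 => -> /eqP.
  by rewrite oppr_eq0 => /eqP ->.
move=> al be; apply: (form_ok (T := [pred i | [|| i == u, i == v | i == w]]) (b0 := true)) => //.
- move=> i; rewrite !mxE /=; apply: contraR; rewrite !negb_or => /and3P[/negbTE -> /negbTE -> /negbTE ->].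
  by rewrite !subrr !mulr0 addr0.
- move=> i j /or3P[] /eqP -> /or3P[] /eqP ->;
    by rewrite ?eirr ?eqxx ?euv ?evu ?evw ?ewv ?ewu ?euw ?huv ?hvu ?hvw ?hwv ?hwu ?huw.
- by move=> i /or3P[] /eqP ->.
- move=> _; rewrite (eq_bigr (fun i => al * ((i == u)%:R - (i == v)%:R) + be * ((i == v)%:R - (i == w)%:R))); last by move=> i _; rewrite !mxE.
  by rewrite big_split /= -!mulr_sumr !sumrB !sum_ind !subrr !mulr0 addr0.
Qed.

Theorem mainTheorem14 (m : nat) (e : rel 'I_m) (s : seq algC) :
  (3 <= m)%N -> simple_graph e -> laplacian_spectrum e s ->
  (dk e 3)%:R <= s`_1.
Proof.
move=> m3 sg [hchar hsort].
have [u [v [w [[huv hvw hwu] [du dv dw]]]]] := three_vertices e m3.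
move: du dv dw; set d := dk e 3 => du dv dw.
have Lh := lap_herm sg.
pose P := spectralmx (laplacian e); pose D := spectral_diag (laplacian e).
have Pu : P \is unitarymx := spectral_unitarymx _.
have /orthomx_spectralP LE := hermitian_normalmx Lh.
have LE' : laplacian e = ct P *m diag_mx D *m P by rewrite {1}LE invmx_unitary.
have Dr : forall j, D 0 j \is Num.real.
  by move=> j; move/mxOverP: (hermitian_spectral_diag_real Lh) => /(_ 0 j).
have hp : perm_eq s [seq D 0 j | j <- enum 'I_m].
  apply: prod_XsubC_eq; rewrite -hchar {1}LE char_poly_conjmx ?spectral_unit //.
  rewrite char_poly_trig ?diag_mx_is_trig // big_map big_enum /=.
  by apply: eq_bigr => j _; rewrite mxE eqxx mulr1n.
have sz : size s = m by rewrite (perm_size hp) size_map size_enum_ord.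
have sreal : forall x, x \in s -> x \is Num.real.
  by move=> x; rewrite (perm_mem hp) => /mapP [j _ ->].
have dreal : (d%:R : algC) \is Num.real by apply: realn.
have s1r : s`_1 \is Num.real by apply: sreal; apply: mem_nth; rewrite sz; apply: ltn_trans m3.
rewrite (real_leNgt dreal s1r); apply/negP => hlt.
pose p := fun x : algC => d%:R <= x.
have hc : (count p s <= 1)%N.
  move: hsort sz hlt; clear hchar hp sreal s1r; case: s => [|x0 [|x1 r]] //=; first by move=> _ h; rewrite -h in m3.
  move=> /andP[_ hpath] _ hlt.
  have /allP hall := order_path_min (fun a b c h1 h2 => le_trans h2 h1) hpath.
  have -> : p x1 = false by apply/negP => hx; move: (le_lt_trans hx hlt); rewrite ltxx.
  have -> : count p r = 0%N.
    apply/eqP; rewrite -leqn0 leqNgt -has_count; apply/hasPn => y yr; apply/negP => hy.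
    by move: (le_lt_trans (le_trans hy (hall y yr)) hlt); rewrite ltxx.
  by rewrite addn0; case: (p x0).
have hcard : (#|[pred j : 'I_m | p (D 0%R j)]| <= 1)%N.
  by rewrite card_count -(count_map (D 0) p) -((permP hp) p).
have [k hk] : exists k, forall j, j != k -> D 0 j < d%:R.
  case: (pickP [pred j : 'I_m | p (D 0%R j)]) => [k hk|none].
    exists k => j jk; rewrite (real_ltNge (Dr j) dreal); apply/negP => hj.
    have : (1 < #|[pred j : 'I_m | p (D 0%R j)]|)%N by apply/card_gt1P; exists j, k.
    by rewrite ltnNge hcard.
  by exists u => j _; rewrite (real_ltNge (Dr j) dreal); move: (none j); rewrite /= /p => ->.
case euv: (e u v); last by apply: (pair_false sg Pu LE' hk huv) => //; rewrite euv.
case evw: (e v w); last by apply: (pair_false sg Pu LE' hk hvw) => //; rewrite evw.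
case ewu: (e w u); last by apply: (pair_false sg Pu LE' hk hwu) => //; rewrite ewu.
exact: (tri_false sg Pu LE' hk huv hvw hwu euv evw ewu du dv dw).
Qed.
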